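(* Let $S_1,S_2$ be strips and let $h:\partial S_1\to\partial S_2$ be a homeomorphism which is monotone (i.e. either preserves or reverses the partial order on the boundaries described in the context). Then $h$ extends to a foliated homeomorphism $\hat h:S_1\to S_2$ (with respect to the canonical foliations), i.e. $\hat h|_{\partial S_1}=h$.
   Context: A subset $S\subset\mathbb{R}^2$ is a strip if for some real numbers $u<v$ one has $\mathbb{R}\times(u,v)\subset S\subset\mathbb{R}\times[u,v]$ and $S$ is open in $\mathbb{R}\times[u,v]$. Put $\partial_-S=S\cap(\mathbb{R}\times\{u\})$, $\partial_+S=S\cap(\mathbb{R}\times\{v\})$, $\partial S=\partial_-S\cup\partial_+S$ (a disjoint union of open horizontal intervals, the boundary intervals). The canonical foliation of $S$ consists of the lines $\mathbb{R}\times\{t\}$, $t\in(u,v)$, and the boundary intervals. Partial order on $\partial S$: for $(a,x),(b,y)\in\partial S$, $(a,x)<(b,y)$ iff $a<b$ and $x=y$ (so $\partial_-S$ and $\partial_+S$ are each linearly ordered and mutually incomparable). For strips $S_1,S_2$, subsets $A\subset\partial S_1$, $B\subset\partial S_2$, a bijection $h:A\to B$ preserves order if for all $a,a'\in A$: $a<a'\iff h(a)<h(a')$; it reverses order if $a<a'\iff h(a)>h(a')$; it is monotone if it preserves or reverses order. A foliated homeomorphism maps leaves onto leaves. *)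

(* Defs.v *)
From Stdlib Require Import Reals.
Open Scope R_scope.

Definition pt := (R * R)%type.

(* Max-norm distance on R^2 (induces the standard topology). *)
Definition dist2 (p q : pt) : R :=
  Rmax (Rabs (fst p - fst q)) (Rabs (snd p - snd q)).

Definition cont_on (A : pt -> Prop) (f : pt -> pt) : Prop :=
  forall p, A p -> forall eps, 0 < eps ->
    exists delta, 0 < delta /\
      forall q, A q -> dist2 p q < delta -> dist2 (f p) (f q) < eps.

Definition homeo_on (A B : pt -> Prop) (f : pt -> pt) : Prop :=
  (forall p, A p -> B (f p)) /\
  exists g : pt -> pt,
    (forall q, B q -> A (g q)) /\
    (forall p, A p -> g (f p) = p) /\
    (forall q, B q -> f (g q) = q) /\
    cont_on A f /\ cont_on B g.

Definition is_strip (S : pt -> Prop) (u v : R) : Prop :=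
  u < v /\
  (forall p : pt, u < snd p < v -> S p) /\
  (forall p : pt, S p -> u <= snd p <= v) /\
  (forall p, S p -> exists eps, 0 < eps /\
     forall q : pt, u <= snd q <= v -> dist2 p q < eps -> S q).

Definition bd (S : pt -> Prop) (u v : R) (p : pt) : Prop :=
  S p /\ (snd p = u \/ snd p = v).

Definition bd_lt (p q : pt) : Prop := fst p < fst q /\ snd p = snd q.

Definition preserves_order (A : pt -> Prop) (h : pt -> pt) : Prop :=
  forall a a', A a -> A a' -> (bd_lt a a' <-> bd_lt (h a) (h a')).

Definition reverses_order (A : pt -> Prop) (h : pt -> pt) : Prop :=
  forall a a', A a -> A a' -> (bd_lt a a' <-> bd_lt (h a') (h a)).

Definition monotone (A : pt -> Prop) (h : pt -> pt) : Prop :=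
  preserves_order A h \/ reverses_order A h.

(* The boundary interval of ∂S containing p0 (its connected component):
   points q at the same height such that the whole horizontal segment
   between p0 and q lies in ∂S. *)
Definition bd_interval (S : pt -> Prop) (u v : R) (p0 q : pt) : Prop :=
  snd q = snd p0 /\
  forall x, Rmin (fst p0) (fst q) <= x <= Rmax (fst p0) (fst q) ->
    bd S u v (x, snd p0).

Definition leaf (S : pt -> Prop) (u v : R) (L : pt -> Prop) : Prop :=
  (exists t, u < t < v /\ forall q : pt, L q <-> snd q = t) \/
  (exists p0, bd S u v p0 /\ forall q, L q <-> bd_interval S u v p0 q).

Definition image (f : pt -> pt) (L : pt -> Prop) : pt -> Prop :=
  fun q => exists p, L p /\ q = f p.

Definition foliated_homeo (S1 : pt -> Prop) (u1 v1 : R)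
    (S2 : pt -> Prop) (u2 v2 : R) (H : pt -> pt) : Prop :=
  homeo_on S1 S2 H /\
  forall L, leaf S1 u1 v1 L -> leaf S2 u2 v2 (image H L).

(* Main.v *)
Require Import Defs.
From Stdlib Require Import Reals Lra Psatz Classical ClassicalEpsilon.
From Coquelicot Require Import Coquelicot.
Open Scope R_scope.

Lemma ballR (x e y : R) : ball x e y <-> Rabs (y - x) < e.
Proof. split; intro H; exact H. Qed.

Lemma ballP (p q : R * R) e : ball p e q <-> Rabs (fst q - fst p) < e /\ Rabs (snd q - snd p) < e.
Proof. split; intro H; exact H. Qed.

Lemma dist2_lt p q d : dist2 p q < d <-> Rabs (fst q - fst p) < d /\ Rabs (snd q - snd p) < d.
Proof.
  unfold dist2. rewrite (Rabs_minus_sym (fst q)), (Rabs_minus_sym (snd q)).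
  split.
  - intro H. split; eapply Rle_lt_trans; [apply Rmax_l| exact H | apply Rmax_r | exact H].
  - intros [H1 H2]. unfold Rmax; destruct Rle_dec; auto.
Qed.

Lemma cont2_eps (f : R * R -> R) p : continuous f p ->
  forall eps, 0 < eps -> exists d, 0 < d /\ forall q, dist2 p q < d -> Rabs (f q - f p) < eps.
Proof.
  intros Hc eps He.
  destruct (proj1 (filterlim_locally f (f p)) Hc (mkposreal eps He)) as [[d Hd] Hb].
  exists d; split; auto. intros q Hq. apply dist2_lt in Hq.
  apply (Hb q). apply ballP. exact Hq.
Qed.

Lemma eps_cont2 (f : R * R -> R) p :
  (forall eps, 0 < eps -> exists d, 0 < d /\ forall q, dist2 p q < d -> Rabs (f q - f p) < eps) ->
  continuous f p.
Proof.
  intros H. apply filterlim_locally. intros [eps He].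
  destruct (H eps He) as [d [Hd Hq]].
  exists (mkposreal d Hd). intros q Hb. apply ballP in Hb. apply ballR.
  apply Hq. apply dist2_lt. exact Hb.
Qed.

Lemma eps_cont1 (f : R -> R) x :
  (forall eps, 0 < eps -> exists d, 0 < d /\ forall y, Rabs (y - x) < d -> Rabs (f y - f x) < eps) ->
  continuous f x.
Proof.
  intros H. apply filterlim_locally. intros [eps He].
  destruct (H eps He) as [d [Hd Hq]].
  exists (mkposreal d Hd). intros q Hb. apply ballR in Hb. apply ballR. apply Hq. exact Hb.
Qed.

Lemma cont1_eps (f : R -> R) x : continuous f x ->
  forall eps, 0 < eps -> exists d, 0 < d /\ forall y, Rabs (y - x) < d -> Rabs (f y - f x) < eps.
Proof.
  intros Hc eps He.
  destruct (proj1 (filterlim_locally f (f x)) Hc (mkposreal eps He)) as [[d Hd] Hb].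
  exists d; split; [exact Hd|]. intros q Hq. apply (Hb q). apply ballR. exact Hq.
Qed.

Lemma cont1_pt (f : R -> R) x : continuous f x -> continuity_pt f x.
Proof. intro H. apply (proj2 (continuity_pt_filterlim f x)); exact H. Qed.


Lemma div_lt_l a b c : 0 < c -> a < b * c -> a / c < b.
Proof. intros Hc H. unfold Rdiv. apply (Rmult_lt_reg_r c); auto.
  rewrite Rmult_assoc, Rinv_l by lra. lra. Qed.
Lemma div_lt_r a b c : 0 < c -> b * c < a -> b < a / c.
Proof. intros Hc H. unfold Rdiv. apply (Rmult_lt_reg_r c); auto.
  rewrite Rmult_assoc, Rinv_l by lra. lra. Qed.
Lemma div_le_l a b c : 0 < c -> a <= b * c -> a / c <= b.
Proof. intros Hc H. unfold Rdiv. apply (Rmult_le_reg_r c); auto.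
  rewrite Rmult_assoc, Rinv_l by lra. lra. Qed.
Lemma div_le_r a b c : 0 < c -> b * c <= a -> b <= a / c.
Proof. intros Hc H. unfold Rdiv. apply (Rmult_le_reg_r c); auto.
  rewrite Rmult_assoc, Rinv_l by lra. lra. Qed.
Lemma div_mul a c : 0 < c -> a / c * c = a.
Proof. intros. field. lra. Qed.

Definition sig (y : R) : R := y / (1 + Rabs y).

Ltac rabs := unfold Rabs in *; repeat match goal with
  | |- context [Rcase_abs ?x] => destruct (Rcase_abs x)
  | H : context [Rcase_abs ?x] |- _ => destruct (Rcase_abs x) end.

Lemma sig_bound y : -1 < sig y < 1.
Proof. unfold sig.
  split; [apply div_lt_r | apply div_lt_l]; rabs; lra.
Qed.

Lemma sig_lt a b : a < b -> sig a < sig b.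
Proof. intro H. unfold sig.
  apply div_lt_r. rabs; lra.
  unfold Rdiv. rewrite Rmult_assoc, (Rmult_comm (/ _)), <- Rmult_assoc.
  apply div_lt_l. rabs; lra. rabs; nra.
Qed.

Lemma sig_le a b : a <= b -> sig a <= sig b.
Proof. intro H. destruct H. left; apply sig_lt; auto. subst; lra. Qed.

Lemma sig_cont y : continuous sig y.
Proof. unfold sig. apply (continuous_mult (fun x => x) (fun x => / (1 + Rabs x))).
  apply continuous_id. apply continuous_Rinv_comp.
  apply (continuous_plus (fun _ => 1) Rabs). apply continuous_const. apply continuous_Rabs.
  rabs; lra.
Qed.

Definition Q (w s : R) : R := (1 - s) * w / (1 - (1 - s) * Rabs w).

Lemma Q_sig y : Q (sig y) 0 = y.
Proof. unfold Q, sig. rewrite Rminus_0_r, !Rmult_1_l.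
  assert (H : 0 < 1 + Rabs y) by (rabs; lra).
  rewrite Rabs_div by lra. rewrite (Rabs_pos_eq (1 + Rabs y)) by lra.
  replace (1 - Rabs y / (1 + Rabs y)) with (/ (1 + Rabs y)) by (field; lra).
  field. lra.
Qed.

Lemma frac_le x y D D' : 0 < D -> 0 < D' -> x * D' <= y * D -> x / D <= y / D'.
Proof. intros HD HD' H.
  replace (x / D) with (x * D' / (D * D')) by (field; lra).
  replace (y / D') with (y * D / (D * D')) by (field; lra).
  unfold Rdiv. apply Rmult_le_compat_r; [| lra].
  left. apply Rinv_0_lt_compat. nra.
Qed.

Lemma Q_mono w w' s : 0 < s < 1 -> Rabs w <= 1 -> Rabs w' <= 1 -> w <= w' -> Q w s <= Q w' s.
Proof. intros Hs Hw Hw' H. unfold Q. apply frac_le.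
  - assert (0 <= Rabs w) by apply Rabs_pos. nra.
  - assert (0 <= Rabs w') by apply Rabs_pos. nra.
  - set (a := 1 - s). assert (Ha : 0 < a < 1) by (unfold a; lra).
    assert (w * (1 - a * Rabs w') <= w' * (1 - a * Rabs w)).
    { destruct (Rle_or_lt 0 w) as [h1|h1]; destruct (Rle_or_lt 0 w') as [h2|h2].
      - rewrite !Rabs_pos_eq by lra. nra.
      - lra.
      - rewrite (Rabs_pos_eq w') by lra. rewrite (Rabs_left w) by lra.
        rewrite (Rabs_left w) in Hw by lra.
        rewrite (Rabs_pos_eq w') in Hw' by lra. assert (Hc : 0 <= 1 - a * w'). { assert (0 <= (1 - a) * w') by (apply Rmult_le_pos; lra). nra. }
        assert (Hc' : 0 <= 1 - a * - w). { assert (0 <= (1 - a) * (- w)) by (apply Rmult_le_pos; lra). nra. }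
        assert (w * (1 - a * w') <= 0). { assert (0 <= (- w) * (1 - a * w')) by (apply Rmult_le_pos; lra). nra. }
        assert (0 <= w' * (1 - a * - w)). { apply Rmult_le_pos; lra. }
        lra.
      - rewrite !Rabs_left by lra. nra. }
    replace (a * w * (1 - a * Rabs w')) with (a * (w * (1 - a * Rabs w'))) by ring.
    replace (a * w' * (1 - a * Rabs w)) with (a * (w' * (1 - a * Rabs w))) by ring.
    apply Rmult_le_compat_l; lra.
Qed.

Lemma Q_bound w s : 0 < s < 1 -> Rabs w <= 1 -> Rabs (Q w s) <= (1 - s) / s.
Proof. intros Hs Hw. unfold Q. assert (0 <= Rabs w) by apply Rabs_pos.
  assert (HD : 0 < 1 - (1 - s) * Rabs w) by nra.
  rewrite Rabs_div by lra. rewrite (Rabs_pos_eq (1 - (1 - s) * Rabs w)) by lra.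
  rewrite Rabs_mult, (Rabs_pos_eq (1 - s)) by lra.
  apply frac_le; [lra|lra|]. nra.
Qed.

Lemma Q_cont w0 s0 : 0 < 1 - (1 - s0) * Rabs w0 ->
  continuous (fun z : R * R => Q (fst z) (snd z)) (w0, s0).
Proof. intro H. unfold Q.
  apply (continuous_mult (fun z : R * R => (1 - snd z) * fst z) (fun z : R * R => / (1 - (1 - snd z) * Rabs (fst z)))).
  - apply (continuous_mult (fun z : R * R => (1 - snd z)) (fun z : R * R => fst z)).
    + apply (continuous_plus (fun _ : R * R => 1) (fun z : R * R => - snd z)).
      apply continuous_const. apply (continuous_opp (fun z : R * R => snd z)). apply continuous_snd.
    + apply continuous_fst.
  - apply (continuous_comp (fun z : R * R => 1 - (1 - snd z) * Rabs (fst z)) Rinv).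
    + apply (continuous_plus (fun _ : R * R => 1) (fun z : R * R => - ((1 - snd z) * Rabs (fst z)))).
      apply continuous_const. apply (continuous_opp (fun z : R * R => ((1 - snd z) * Rabs (fst z)))).
      apply (continuous_mult (fun z : R * R => (1 - snd z)) (fun z : R * R => Rabs (fst z))).
      * apply (continuous_plus (fun _ : R * R => 1) (fun z : R * R => - snd z)).
        apply continuous_const. apply (continuous_opp (fun z : R * R => snd z)). apply continuous_snd.
      * apply (continuous_comp (fun z : R * R => fst z) Rabs). apply continuous_fst. apply continuous_Rabs.
    + apply continuous_Rinv. simpl. lra.
Qed.


Definition Eset (B : R -> Prop) (f : R -> R) (x r : R) (e : R) : Prop :=
  e = -1 \/ exists y, B y /\ e = sig (f y) - Rabs r * Rmax 0 (y - x).

Lemma Eset_bound B f x r : bound (Eset B f x r).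
Proof. exists 1. intros e [He | [y [_ He]]]; subst. lra.
  assert (0 <= Rabs r * Rmax 0 (y - x)) by (apply Rmult_le_pos; [apply Rabs_pos | apply Rmax_l]).
  generalize (sig_bound (f y)). lra.
Qed.

Lemma Eset_ne B f x r : exists e, Eset B f x r e.
Proof. exists (-1). left; reflexivity. Qed.

Definition E (B : R -> Prop) (f : R -> R) (x r : R) : R :=
  proj1_sig (completeness (Eset B f x r) (Eset_bound B f x r) (Eset_ne B f x r)).

Lemma E_lub B f x r : is_lub (Eset B f x r) (E B f x r).
Proof. unfold E. destruct completeness; simpl; auto. Qed.

Lemma lub_cmp A A' a a' c : is_lub A a -> is_lub A' a' ->
  (forall e, A e -> exists e', A' e' /\ e - c <= e') -> a - c <= a'.
Proof. intros [Hu Hl] [Hu' Hl'] H.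
  assert (a <= a' + c); [|lra].
  apply Hl. intros e He. destruct (H e He) as [e' [He' Hle]].
  generalize (Hu' e' He'). lra.
Qed.

Lemma E_bounds B f x r : -1 <= E B f x r <= 1.
Proof. destruct (E_lub B f x r) as [Hu Hl]. split.
  - apply Hu. left; reflexivity.
  - apply Hl. intros e [He | [y [_ He]]]; subst. lra.
    assert (0 <= Rabs r * Rmax 0 (y - x)) by (apply Rmult_le_pos; [apply Rabs_pos | apply Rmax_l]).
    generalize (sig_bound (f y)). lra.
Qed.

Lemma E_ge B f x r y : B y -> sig (f y) - Rabs r * Rmax 0 (y - x) <= E B f x r.
Proof. intro Hy. destruct (E_lub B f x r) as [Hu _]. apply Hu. right. exists y; auto. Qed.

Lemma Rmax_le_compat a b c d : a <= c -> b <= d -> Rmax a b <= Rmax c d.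
Proof. intros. unfold Rmax. repeat destruct Rle_dec; lra. Qed.

Lemma E_mono B f x x' r : x <= x' -> E B f x r <= E B f x' r.
Proof. intro Hx.
  assert (E B f x r - 0 <= E B f x' r); [|lra].
  apply (lub_cmp _ _ _ _ _ (E_lub B f x r) (E_lub B f x' r)).
  intros e [He | [y [Hy He]]].
  - exists e. split. left; auto. lra.
  - exists (sig (f y) - Rabs r * Rmax 0 (y - x')). split. right. exists y; auto.
    subst. assert (Rmax 0 (y - x') <= Rmax 0 (y - x)) by (apply Rmax_le_compat; lra).
    assert (0 <= Rabs r) by apply Rabs_pos. nra.
Qed.

Lemma E_lipx B f x x' r : 0 <= r -> E B f x r - r * Rabs (x - x') <= E B f x' r.
Proof. intro Hr.
  apply (lub_cmp _ _ _ _ _ (E_lub B f x r) (E_lub B f x' r)).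
  intros e [He | [y [Hy He]]].
  - exists e. split. left; auto. assert (0 <= r * Rabs (x - x')) by (apply Rmult_le_pos; auto; apply Rabs_pos). lra.
  - exists (sig (f y) - Rabs r * Rmax 0 (y - x')). split. right. exists y; auto.
    subst. rewrite Rabs_pos_eq by lra.
    assert (Rmax 0 (y - x') <= Rmax 0 (y - x) + Rabs (x - x')).
    { unfold Rmax. repeat destruct Rle_dec; rabs; lra. }
    nra.
Qed.

Lemma E_monor B f x r r' : 0 <= r -> r <= r' -> E B f x r' <= E B f x r.
Proof. intros Hr Hr'.
  assert (E B f x r' - 0 <= E B f x r); [|lra].
  apply (lub_cmp _ _ _ _ _ (E_lub B f x r') (E_lub B f x r)).
  intros e [He | [y [Hy He]]].
  - exists e. split. left; auto. lra.
  - exists (sig (f y) - Rabs r * Rmax 0 (y - x)). split. right. exists y; auto.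
    subst. rewrite !Rabs_pos_eq by lra. assert (0 <= Rmax 0 (y - x)) by apply Rmax_l. nra.
Qed.

Lemma E_lipr B f x r r' : 1 <= r -> r <= r' -> E B f x r - 2 * (r' - r) <= E B f x r'.
Proof. intros Hr Hr'.
  apply (lub_cmp _ _ _ _ _ (E_lub B f x r) (E_lub B f x r')).
  intros e [He | [y [Hy He]]].
  - exists e. split. left; auto. lra.
  - subst. rewrite !Rabs_pos_eq by lra. set (m := Rmax 0 (y - x)).
    assert (Hm : 0 <= m) by apply Rmax_l. generalize (sig_bound (f y)); intro Hs.
    destruct (Rle_or_lt 2 (r * m)).
    + exists (-1). split. left; auto. lra.
    + exists (sig (f y) - Rabs r' * m). split. right. exists y; auto.
      rewrite Rabs_pos_eq by lra. assert (m < 2) by nra. nra.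
Qed.

Lemma E_conv B f x : (forall y z, B y -> B z -> y <= z -> f y <= f z) ->
  (forall eps, 0 < eps -> exists d, 0 < d /\ forall y, B y -> Rabs (y - x) < d -> Rabs (f y - f x) < eps) ->
  B x -> forall eps, 0 < eps -> exists R0, 1 <= R0 /\ forall r, R0 <= r -> Rabs (E B f x r - sig (f x)) < eps.
Proof. intros Hmon Hc Hx eps He.
  destruct (cont1_eps sig (f x) (sig_cont (f x)) (eps / 2)) as [eta [Heta Hs]]. lra.
  destruct (Hc eta Heta) as [d [Hd Hfd]].
  exists (Rmax 1 (2 / d)). split. apply Rmax_l.
  intros r Hr. assert (Hr1 : 1 <= r) by (eapply Rle_trans; [apply Rmax_l|exact Hr]).
  assert (Hr2 : 2 <= r * d).
  { assert (2 / d <= r) by (eapply Rle_trans; [apply Rmax_r|exact Hr]).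
    assert (2 / d * d = 2) by (field; lra). nra. }
  assert (Hlow : sig (f x) <= E B f x r).
  { generalize (E_ge B f x r x Hx). replace (x - x) with 0 by ring. rewrite Rmax_left by lra. lra. }
  assert (Hup : E B f x r <= sig (f x) + eps / 2).
  { destruct (E_lub B f x r) as [_ Hl]. apply Hl.
    intros e [He' | [y [Hy He']]]; subst.
    - generalize (sig_bound (f x)). lra.
    - rewrite Rabs_pos_eq by lra.
      assert (Hm : 0 <= Rmax 0 (y - x)) by apply Rmax_l.
      destruct (Rle_or_lt y x).
      + assert (sig (f y) <= sig (f x)) by (apply sig_le; apply Hmon; auto). nra.
      + destruct (Rlt_or_le y (x + d)).
        * assert (Rabs (sig (f y) - sig (f x)) < eps / 2).
          { apply Hs. apply Hfd; auto. rabs; lra. }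
          assert (0 <= r * Rmax 0 (y - x)) by nra. rabs; lra.
        * rewrite Rmax_right by lra. generalize (sig_bound (f y)) (sig_bound (f x)). nra. }
  rabs; lra.
Qed.


Lemma E_absle B f x r : Rabs (E B f x r) <= 1.
Proof. generalize (E_bounds B f x r). intros. rabs; lra. Qed.

Lemma E_cont2 B f x0 r0 : 1 < r0 -> continuous (fun z : R * R => E B f (fst z) (snd z)) (x0, r0).
Proof. intro Hr0. apply eps_cont2. intros eps He.
  assert (Hp : 0 < eps / (r0 + 4)) by (apply Rdiv_lt_0_compat; lra).
  exists (Rmin ((r0 - 1) / 2) (Rmin 1 (eps / (r0 + 4)))). split.
  { apply Rmin_pos. lra. apply Rmin_pos; lra. }
  intros [x r] Hq. apply dist2_lt in Hq. simpl in *. destruct Hq as [Hx Hr].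
  assert (Hd1 := Rmin_l ((r0 - 1) / 2) (Rmin 1 (eps / (r0 + 4)))).
  assert (Hd2 := Rmin_r ((r0 - 1) / 2) (Rmin 1 (eps / (r0 + 4)))).
  assert (Hd4 := Rmin_l 1 (eps / (r0 + 4))).
  assert (Hd5 := Rmin_r 1 (eps / (r0 + 4))).
  set (d := Rmin ((r0 - 1) / 2) (Rmin 1 (eps / (r0 + 4)))) in *.
  assert (Hd3 : d * (r0 + 4) <= eps).
  { assert (eps / (r0 + 4) * (r0 + 4) = eps) by (field; lra).
    apply Rle_trans with (eps / (r0 + 4) * (r0 + 4)); [apply Rmult_le_compat_r; lra | lra]. }
  assert (Hr1 : 1 <= r) by (rabs; lra).
  assert (Hr2 : r <= r0 + 1) by (rabs; lra).
  assert (A1 : Rabs (E B f x r - E B f x0 r) <= r * Rabs (x - x0)).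
  { generalize (E_lipx B f x x0 r) (E_lipx B f x0 x r). rewrite (Rabs_minus_sym x0 x).
    intros h1 h2. specialize (h1 ltac:(lra)). specialize (h2 ltac:(lra)).
    apply Rabs_le. lra. }
  assert (A2 : Rabs (E B f x0 r - E B f x0 r0) <= 2 * Rabs (r - r0)).
  { destruct (Rle_or_lt r r0).
    - generalize (E_monor B f x0 r r0) (E_lipr B f x0 r r0). intros h1 h2.
      specialize (h1 ltac:(lra) ltac:(lra)). specialize (h2 ltac:(lra) ltac:(lra)).
      apply Rabs_le. rabs; lra.
    - generalize (E_monor B f x0 r0 r) (E_lipr B f x0 r0 r). intros h1 h2.
      specialize (h1 ltac:(lra) ltac:(lra)). specialize (h2 ltac:(lra) ltac:(lra)).
      apply Rabs_le. rabs; lra. }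
  assert (r * Rabs (x - x0) <= (r0 + 1) * d).
  { apply Rmult_le_compat; try lra. apply Rabs_pos. }
  assert (Rabs (E B f x r - E B f x0 r0) <= Rabs (E B f x r - E B f x0 r) + Rabs (E B f x0 r - E B f x0 r0)).
  { replace (E B f x r - E B f x0 r0) with ((E B f x r - E B f x0 r) + (E B f x0 r - E B f x0 r0)) by ring.
    apply Rabs_triang. }
  assert (0 < d) by (unfold d; apply Rmin_pos; [lra| apply Rmin_pos; lra]).
  nra.
Qed.

Lemma abs3 a b c e1 e2 e3 : Rabs a < e1 -> Rabs b <= e2 -> Rabs c <= e3 -> Rabs (a + b + c) < e1 + e2 + e3.
Proof. intros. eapply Rle_lt_trans. apply Rabs_triang. eapply Rle_lt_trans.
  apply Rplus_le_compat_r. apply Rabs_triang. lra. Qed.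

Section Core.
Variables (Bm Bp : R -> Prop) (fm fp : R -> R).

Definition Pm (x s : R) := Q (E Bm fm x (/ s)) s.
Definition Pp (x s : R) := Q (E Bp fp x (/ (1 - s))) (1 - s).
Definition Phi (x s : R) := Pm x s + Pp x s + s * (1 - s) * x.

Lemma Pm_mono x x' s : 0 < s < 1 -> x <= x' -> Pm x s <= Pm x' s.
Proof. intros Hs Hx. unfold Pm. apply Q_mono; auto using E_absle. apply E_mono; auto. Qed.
Lemma Pp_mono x x' s : 0 < s < 1 -> x <= x' -> Pp x s <= Pp x' s.
Proof. intros Hs Hx. unfold Pp. apply Q_mono; auto using E_absle. lra. apply E_mono; auto. Qed.

Lemma Phi_mono x x' s : 0 < s < 1 -> x < x' -> Phi x s < Phi x' s.
Proof. intros Hs Hx. unfold Phi.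
  generalize (Pm_mono x x' s Hs ltac:(lra)) (Pp_mono x x' s Hs ltac:(lra)).
  assert (0 < s * (1 - s)) by nra. nra.
Qed.

Lemma Phi_monole x x' s : 0 < s < 1 -> x <= x' -> Phi x s <= Phi x' s.
Proof. intros Hs [H|H]. left; apply Phi_mono; auto. subst; lra. Qed.

Lemma Pm_cont x0 s0 : 0 < s0 < 1 -> continuous (fun z : R * R => Pm (fst z) (snd z)) (x0, s0).
Proof. intro Hs. unfold Pm.
  apply (continuous_comp_2 (fun z : R * R => E Bm fm (fst z) (/ snd z)) (fun z : R * R => snd z) Q).
  - apply (continuous_comp_2 (fun z : R * R => fst z) (fun z : R * R => / snd z) (E Bm fm)).
    + apply continuous_fst.
    + apply (continuous_comp (fun z : R * R => snd z) Rinv). apply continuous_snd.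
      apply continuous_Rinv. simpl; lra.
    + simpl. apply E_cont2. rewrite <- Rinv_1. apply Rinv_lt_contravar; lra.
  - apply continuous_snd.
  - simpl. apply Q_cont. generalize (E_absle Bm fm x0 (/ s0)). nra.
Qed.

Lemma Pp_cont x0 s0 : 0 < s0 < 1 -> continuous (fun z : R * R => Pp (fst z) (snd z)) (x0, s0).
Proof. intro Hs. unfold Pp.
  apply (continuous_comp_2 (fun z : R * R => E Bp fp (fst z) (/ (1 - snd z))) (fun z : R * R => 1 - snd z) Q).
  - apply (continuous_comp_2 (fun z : R * R => fst z) (fun z : R * R => / (1 - snd z)) (E Bp fp)).
    + apply continuous_fst.
    + apply (continuous_comp (fun z : R * R => 1 - snd z) Rinv).
      apply (continuous_plus (fun _ : R * R => 1) (fun z : R * R => - snd z)).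
      apply continuous_const. apply (continuous_opp (fun z : R * R => snd z)). apply continuous_snd.
      apply continuous_Rinv. simpl; lra.
    + simpl. apply E_cont2. rewrite <- Rinv_1. apply Rinv_lt_contravar; lra.
  - apply (continuous_plus (fun _ : R * R => 1) (fun z : R * R => - snd z)).
    apply continuous_const. apply (continuous_opp (fun z : R * R => snd z)). apply continuous_snd.
  - simpl. apply Q_cont. generalize (E_absle Bp fp x0 (/ (1 - s0))). nra.
Qed.

Lemma Phi_cont x0 s0 : 0 < s0 < 1 -> continuous (fun z : R * R => Phi (fst z) (snd z)) (x0, s0).
Proof. intro Hs. unfold Phi.
  apply (continuous_plus (fun z : R * R => Pm (fst z) (snd z) + Pp (fst z) (snd z)) (fun z : R * R => snd z * (1 - snd z) * fst z)).
  - apply (continuous_plus (fun z : R * R => Pm (fst z) (snd z)) (fun z : R * R => Pp (fst z) (snd z))).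
    apply Pm_cont; auto. apply Pp_cont; auto.
  - apply (continuous_mult (fun z : R * R => snd z * (1 - snd z)) (fun z : R * R => fst z)).
    + apply (continuous_mult (fun z : R * R => snd z) (fun z : R * R => 1 - snd z)).
      apply continuous_snd.
      apply (continuous_plus (fun _ : R * R => 1) (fun z : R * R => - snd z)).
      apply continuous_const. apply (continuous_opp (fun z : R * R => snd z)). apply continuous_snd.
    + apply continuous_fst.
Qed.

Lemma Phi_cont1 s : 0 < s < 1 -> continuity (fun x => Phi x s).
Proof. intros Hs x. apply cont1_pt. apply eps_cont1. intros eps He.
  destruct (cont2_eps _ _ (Phi_cont x s Hs) eps He) as [d [Hd Hq]].
  exists d. split; auto. intros y Hy. apply (Hq (y, s)). apply dist2_lt. simpl.
  split; auto. replace (s - s) with 0 by ring. rewrite Rabs_R0; lra.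
Qed.

Lemma Phi_surj s y : 0 < s < 1 -> exists x, Phi x s = y.
Proof. intro Hs. set (b := Rabs (y - Phi 0 s) / (s * (1 - s))).
  assert (Hp : 0 < s * (1 - s)) by nra.
  assert (Hb : 0 <= b) by (unfold b; apply Rmult_le_pos; [apply Rabs_pos| left; apply Rinv_0_lt_compat; auto]).
  assert (Hbb : b * (s * (1 - s)) = Rabs (y - Phi 0 s)) by (unfold b; field; lra).
  assert (H1 : Phi 0 s + s * (1 - s) * b <= Phi b s).
  { unfold Phi. generalize (Pm_mono 0 b s Hs Hb) (Pp_mono 0 b s Hs Hb). lra. }
  assert (H2 : Phi (- b) s <= Phi 0 s - s * (1 - s) * b).
  { unfold Phi. generalize (Pm_mono (-b) 0 s Hs ltac:(lra)) (Pp_mono (-b) 0 s Hs ltac:(lra)). lra. }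
  destruct (IVT_gen (fun x => Phi x s) (- b) b y (Phi_cont1 s Hs)) as [x [_ Hx]].
  - split.
    + eapply Rle_trans; [apply Rmin_l|]. rabs; nra.
    + eapply Rle_trans; [|apply Rmax_r]. rabs; nra.
  - exists x. exact Hx.
Qed.

Lemma P_conv (B : R -> Prop) (f : R -> R) x : (forall y z, B y -> B z -> y <= z -> f y <= f z) ->
  (forall eps, 0 < eps -> exists d, 0 < d /\ forall y, B y -> Rabs (y - x) < d -> Rabs (f y - f x) < eps) ->
  B x -> forall eps, 0 < eps -> exists d, 0 < d /\ forall s, 0 < s -> s < d ->
   Rabs (Q (E B f x (/ s)) s - f x) < eps.
Proof. intros Hmon Hc Hx eps He.
  assert (HQ := Q_cont (sig (f x)) 0). rewrite Rminus_0_r, Rmult_1_l in HQ.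
  specialize (HQ ltac:(generalize (sig_bound (f x)); intros; rabs; lra)).
  destruct (cont2_eps _ _ HQ eps He) as [eta [Heta Hq]].
  simpl in Hq. rewrite Q_sig in Hq.
  destruct (E_conv B f x Hmon Hc Hx eta Heta) as [R0 [HR0 HR]].
  exists (Rmin eta (/ R0)). split. apply Rmin_pos; auto. apply Rinv_0_lt_compat; lra.
  intros s Hs Hsd.
  assert (Hs1 : s < eta) by (eapply Rlt_le_trans; [exact Hsd| apply Rmin_l]).
  assert (Hs2 : s < / R0) by (eapply Rlt_le_trans; [exact Hsd| apply Rmin_r]).
  apply (Hq (E B f x (/ s), s)). apply dist2_lt. simpl. split.
  - apply HR. rewrite <- (Rinv_inv R0). left. apply Rinv_lt_contravar; auto. nra.
  - rabs; lra.
Qed.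

Hypothesis Hmm : forall y z, Bm y -> Bm z -> y <= z -> fm y <= fm z.
Hypothesis Hcm : forall x, Bm x -> forall eps, 0 < eps -> exists d, 0 < d /\ forall y, Bm y -> Rabs (y - x) < d -> Rabs (fm y - fm x) < eps.
Hypothesis Hmp : forall y z, Bp y -> Bp z -> y <= z -> fp y <= fp z.
Hypothesis Hcp : forall x, Bp x -> forall eps, 0 < eps -> exists d, 0 < d /\ forall y, Bp y -> Rabs (y - x) < d -> Rabs (fp y - fp x) < eps.

Lemma Q_small w s : 0 < s <= 1/2 -> Rabs w <= 1 -> Rabs (Q w (1 - s)) <= 2 * s.
Proof. intros Hs Hw. eapply Rle_trans. apply Q_bound; auto. lra.
  apply div_le_l. lra. nra.
Qed.

Lemma Phi_conv0 x : Bm x -> forall eps, 0 < eps -> exists d, 0 < d /\ forall s, 0 < s < 1 -> s < d ->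
  Rabs (Phi x s - fm x) < eps.
Proof. intros Hx eps He.
  destruct (P_conv Bm fm x Hmm (Hcm x Hx) Hx (eps / 3) ltac:(lra)) as [d1 [Hd1 K1]].
  exists (Rmin (Rmin d1 (1/2)) (Rmin (eps / 6) (eps / (3 * (Rabs x + 1))))).
  assert (0 < eps / (3 * (Rabs x + 1))) by (apply Rdiv_lt_0_compat; [lra| generalize (Rabs_pos x); lra]).
  split. repeat apply Rmin_pos; lra.
  intros s Hs Hsd.
  assert (s < d1) by (eapply Rlt_le_trans; [exact Hsd| eapply Rle_trans; apply Rmin_l]).
  assert (s < 1/2) by (eapply Rlt_le_trans; [exact Hsd| eapply Rle_trans; [apply Rmin_l| apply Rmin_r]]).
  assert (s < eps/6) by (eapply Rlt_le_trans; [exact Hsd| eapply Rle_trans; [apply Rmin_r| apply Rmin_l]]).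
  assert (Hs4 : s < eps / (3 * (Rabs x + 1))) by (eapply Rlt_le_trans; [exact Hsd| eapply Rle_trans; apply Rmin_r]).
  specialize (K1 s ltac:(lra) ltac:(lra)).
  assert (K2 : Rabs (Pp x s) <= 2 * s).
  { unfold Pp. apply Q_small; [lra | apply E_absle]. }
  assert (K3 : Rabs (s * (1 - s) * x) <= s * Rabs x).
  { rewrite Rabs_mult, Rabs_mult, (Rabs_pos_eq s), (Rabs_pos_eq (1 - s)) by lra.
    generalize (Rabs_pos x). nra. }
  assert (K4 : s * Rabs x < eps / 3).
  { assert (eps / (3 * (Rabs x + 1)) * (3 * (Rabs x + 1)) = eps) by (field; generalize (Rabs_pos x); lra).
    generalize (Rabs_pos x). nra. }
  unfold Phi. change (Q (E Bm fm x (/ s)) s) with (Pm x s) in K1.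
  replace (Pm x s + Pp x s + s * (1 - s) * x - fm x) with
    ((Pm x s - fm x) + Pp x s + s * (1 - s) * x) by ring.
  eapply Rlt_le_trans; [apply abs3; eassumption|]. lra.
Qed.

Lemma Phi_conv1 x : Bp x -> forall eps, 0 < eps -> exists d, 0 < d /\ forall s, 0 < s < 1 -> 1 - s < d ->
  Rabs (Phi x s - fp x) < eps.
Proof. intros Hx eps He.
  destruct (P_conv Bp fp x Hmp (Hcp x Hx) Hx (eps / 3) ltac:(lra)) as [d1 [Hd1 K1]].
  exists (Rmin (Rmin d1 (1/2)) (Rmin (eps / 6) (eps / (3 * (Rabs x + 1))))).
  assert (0 < eps / (3 * (Rabs x + 1))) by (apply Rdiv_lt_0_compat; [lra| generalize (Rabs_pos x); lra]).
  split. repeat apply Rmin_pos; lra.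
  intros s Hs Hsd. set (t := 1 - s) in *.
  assert (t < d1) by (eapply Rlt_le_trans; [exact Hsd| eapply Rle_trans; apply Rmin_l]).
  assert (t < 1/2) by (eapply Rlt_le_trans; [exact Hsd| eapply Rle_trans; [apply Rmin_l| apply Rmin_r]]).
  assert (t < eps/6) by (eapply Rlt_le_trans; [exact Hsd| eapply Rle_trans; [apply Rmin_r| apply Rmin_l]]).
  assert (Hs4 : t < eps / (3 * (Rabs x + 1))) by (eapply Rlt_le_trans; [exact Hsd| eapply Rle_trans; apply Rmin_r]).
  assert (Ht : 0 < t) by (unfold t; lra).
  specialize (K1 t ltac:(lra) ltac:(lra)).
  assert (K2 : Rabs (Pm x s) <= 2 * t).
  { unfold Pm. replace s with (1 - t) by (unfold t; ring).
    apply Q_small. lra. apply E_absle. }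
  assert (K3 : Rabs (s * (1 - s) * x) <= t * Rabs x).
  { fold t. rewrite Rabs_mult, Rabs_mult, (Rabs_pos_eq s), (Rabs_pos_eq t) by lra.
    assert (0 <= t * Rabs x) by (apply Rmult_le_pos; [lra| apply Rabs_pos]). nra. }
  assert (K4 : t * Rabs x < eps / 3).
  { assert (eps / (3 * (Rabs x + 1)) * (3 * (Rabs x + 1)) = eps) by (field; generalize (Rabs_pos x); lra).
    generalize (Rabs_pos x). nra. }
  unfold Phi. change (Q (E Bp fp x (/ t)) t) with (Pp x s) in K1.
  replace (Pm x s + Pp x s + s * (1 - s) * x - fp x) with
    ((Pp x s - fp x) + Pm x s + s * (1 - s) * x) by ring.
  eapply Rlt_le_trans; [apply abs3; eassumption|]. lra.
Qed.

End Core.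


Section Inv.
Variable Phi : R -> R -> R.
Hypothesis Hmono : forall s x x', 0 < s < 1 -> x < x' -> Phi x s < Phi x' s.
Hypothesis Hsurj : forall s y, 0 < s < 1 -> exists x, Phi x s = y.
Hypothesis Hcont : forall x0 s0, 0 < s0 < 1 -> continuous (fun z : R * R => Phi (fst z) (snd z)) (x0, s0).

Lemma Hmonole s x x' : 0 < s < 1 -> x <= x' -> Phi x s <= Phi x' s.
Proof. intros Hs [H|H]. left; apply Hmono; auto. subst; lra. Qed.

Definition Psi (y s : R) : R := epsilon (inhabits 0) (fun x => Phi x s = y).

Lemma Psi_spec y s : 0 < s < 1 -> Phi (Psi y s) s = y.
Proof. intro Hs. unfold Psi. apply epsilon_spec. apply Hsurj; auto. Qed.

Lemma Phi_inj s x x' : 0 < s < 1 -> Phi x s = Phi x' s -> x = x'.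
Proof. intros Hs H. destruct (Rtotal_order x x') as [h|[h|h]]; auto.
  - specialize (Hmono s x x' Hs h). lra.
  - specialize (Hmono s x' x Hs h). lra.
Qed.

Lemma Psi_Phi x s : 0 < s < 1 -> Psi (Phi x s) s = x.
Proof. intro Hs. apply (Phi_inj s); auto. apply Psi_spec; auto. Qed.

Lemma Phi_cont_s x0 s0 : 0 < s0 < 1 -> forall eps, 0 < eps -> exists d, 0 < d /\
  forall s, Rabs (s - s0) < d -> Rabs (Phi x0 s - Phi x0 s0) < eps.
Proof. intros Hs eps He. destruct (cont2_eps _ _ (Hcont x0 s0 Hs) eps He) as [d [Hd Hq]].
  exists d; split; auto. intros s Hsd. apply (Hq (x0, s)). apply dist2_lt; simpl.
  split; auto. replace (x0 - x0) with 0 by ring. rewrite Rabs_R0; lra.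
Qed.

Lemma Psi_cont y0 s0 : 0 < s0 < 1 -> continuous (fun z : R * R => Psi (fst z) (snd z)) (y0, s0).
Proof. intro Hs. apply eps_cont2. intros eps He.
  set (x0 := Psi y0 s0). assert (Hx0 : Phi x0 s0 = y0) by (apply Psi_spec; auto).
  set (a := x0 - eps / 2). set (b := x0 + eps / 2).
  assert (Ha : Phi a s0 < y0) by (rewrite <- Hx0; apply Hmono; auto; unfold a; lra).
  assert (Hb : y0 < Phi b s0) by (rewrite <- Hx0; apply Hmono; auto; unfold b; lra).
  set (g := Rmin (y0 - Phi a s0) (Phi b s0 - y0) / 2).
  assert (Hg : 0 < g) by (unfold g; apply Rdiv_lt_0_compat; [apply Rmin_pos; lra| lra]).
  assert (Hg1 : g <= (y0 - Phi a s0) / 2) by (unfold g; unfold Rdiv; apply Rmult_le_compat_r; [lra| apply Rmin_l]).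
  assert (Hg2 : g <= (Phi b s0 - y0) / 2) by (unfold g; unfold Rdiv; apply Rmult_le_compat_r; [lra| apply Rmin_r]).
  destruct (Phi_cont_s a s0 Hs g Hg) as [da [Hda Ka]].
  destruct (Phi_cont_s b s0 Hs g Hg) as [db [Hdb Kb]].
  exists (Rmin (Rmin da db) (Rmin g (Rmin s0 (1 - s0)))). split.
  { repeat apply Rmin_pos; lra. }
  intros [y s] Hq. apply dist2_lt in Hq. simpl in Hq. destruct Hq as [Hy Hsq].
  assert (h1 := Rmin_l (Rmin da db) (Rmin g (Rmin s0 (1 - s0)))).
  assert (h2 := Rmin_r (Rmin da db) (Rmin g (Rmin s0 (1 - s0)))).
  assert (h3 := Rmin_l da db). assert (h4 := Rmin_r da db).
  assert (h5 := Rmin_l g (Rmin s0 (1 - s0))). assert (h6 := Rmin_r g (Rmin s0 (1 - s0))).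
  assert (h7 := Rmin_l s0 (1 - s0)). assert (h8 := Rmin_r s0 (1 - s0)).
  set (D := Rmin (Rmin da db) (Rmin g (Rmin s0 (1 - s0)))) in *.
  assert (Hs' : 0 < s < 1) by (rabs; lra).
  specialize (Ka s ltac:(lra)). specialize (Kb s ltac:(lra)).
  simpl. fold x0. set (x := Psi y s). assert (Hx : Phi x s = y) by (apply Psi_spec; auto).
  assert (a < x).
  { destruct (Rlt_or_le a x); auto. assert (Phi x s <= Phi a s) by (apply Hmonole; auto). rabs; lra. }
  assert (x < b).
  { destruct (Rlt_or_le x b); auto. assert (Phi b s <= Phi x s) by (apply Hmonole; auto). rabs; lra. }
  unfold a, b in *. rabs; lra.
Qed.

Variables (B : R -> Prop) (f : R -> R) (sst : R).
Hypothesis Hconv : forall x, B x -> forall eps, 0 < eps -> exists d, 0 < d /\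
  forall s, 0 < s < 1 -> Rabs (s - sst) < d -> Rabs (Phi x s - f x) < eps.
Hypothesis Hfmono : forall y z, B y -> B z -> y < z -> f y < f z.

Lemma sand_fwd x0 : B x0 -> (exists rho, 0 < rho /\ forall y, Rabs (y - x0) < rho -> B y) ->
  (forall eps, 0 < eps -> exists d, 0 < d /\ forall y, B y -> Rabs (y - x0) < d -> Rabs (f y - f x0) < eps) ->
  forall eps, 0 < eps -> exists d, 0 < d /\ forall x s, 0 < s < 1 -> Rabs (s - sst) < d ->
    Rabs (x - x0) < d -> Rabs (Phi x s - f x0) < eps.
Proof. intros Hx0 [rho [Hrho HB]] Hfc eps He.
  destruct (Hfc (eps / 2) ltac:(lra)) as [eta [Heta Hf]].
  set (m := Rmin eta rho / 2).
  assert (Hm : 0 < m) by (unfold m; apply Rdiv_lt_0_compat; [apply Rmin_pos|]; lra).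
  assert (Hm1 : m < eta) by (unfold m; generalize (Rmin_l eta rho); lra).
  assert (Hm2 : m < rho) by (unfold m; generalize (Rmin_r eta rho); lra).
  assert (Ba : B (x0 - m)) by (apply HB; rabs; lra).
  assert (Bb : B (x0 + m)) by (apply HB; rabs; lra).
  assert (Fa : Rabs (f (x0 - m) - f x0) < eps / 2) by (apply Hf; auto; rabs; lra).
  assert (Fb : Rabs (f (x0 + m) - f x0) < eps / 2) by (apply Hf; auto; rabs; lra).
  destruct (Hconv _ Ba (eps / 2) ltac:(lra)) as [da [Hda Ka]].
  destruct (Hconv _ Bb (eps / 2) ltac:(lra)) as [db [Hdb Kb]].
  exists (Rmin (Rmin da db) m). split. repeat apply Rmin_pos; lra.
  intros x s Hs Hsd Hxd.
  assert (h1 := Rmin_l (Rmin da db) m). assert (h2 := Rmin_r (Rmin da db) m).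
  assert (h3 := Rmin_l da db). assert (h4 := Rmin_r da db).
  specialize (Ka s Hs ltac:(lra)). specialize (Kb s Hs ltac:(lra)).
  assert (Phi (x0 - m) s <= Phi x s) by (apply Hmonole; auto; rabs; lra).
  assert (Phi x s <= Phi (x0 + m) s) by (apply Hmonole; auto; rabs; lra).
  rabs; lra.
Qed.

Lemma sand_inv x0 : B x0 -> (exists rho, 0 < rho /\ forall y, Rabs (y - x0) < rho -> B y) ->
  forall eps, 0 < eps -> exists d, 0 < d /\ forall x s, 0 < s < 1 -> Rabs (s - sst) < d ->
    Rabs (Phi x s - f x0) < d -> Rabs (x - x0) < eps.
Proof. intros Hx0 [rho [Hrho HB]] eps He.
  set (m := Rmin eps rho / 2).
  assert (Hm : 0 < m) by (unfold m; apply Rdiv_lt_0_compat; [apply Rmin_pos|]; lra).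
  assert (Hm1 : m < eps) by (unfold m; generalize (Rmin_l eps rho); lra).
  assert (Hm2 : m < rho) by (unfold m; generalize (Rmin_r eps rho); lra).
  assert (Ba : B (x0 - m)) by (apply HB; rabs; lra).
  assert (Bb : B (x0 + m)) by (apply HB; rabs; lra).
  assert (Fa : f (x0 - m) < f x0) by (apply Hfmono; auto; lra).
  assert (Fb : f x0 < f (x0 + m)) by (apply Hfmono; auto; lra).
  set (g := Rmin (f x0 - f (x0 - m)) (f (x0 + m) - f x0) / 2).
  assert (Hg : 0 < g) by (unfold g; apply Rdiv_lt_0_compat; [apply Rmin_pos; lra| lra]).
  assert (Hg1 : g <= (f x0 - f (x0 - m)) / 2) by (unfold g; unfold Rdiv; apply Rmult_le_compat_r; [lra| apply Rmin_l]).
  assert (Hg2 : g <= (f (x0 + m) - f x0) / 2) by (unfold g; unfold Rdiv; apply Rmult_le_compat_r; [lra| apply Rmin_r]).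
  destruct (Hconv _ Ba g Hg) as [da [Hda Ka]].
  destruct (Hconv _ Bb g Hg) as [db [Hdb Kb]].
  exists (Rmin (Rmin da db) g). split. repeat apply Rmin_pos; lra.
  intros x s Hs Hsd Hy.
  assert (h1 := Rmin_l (Rmin da db) g). assert (h2 := Rmin_r (Rmin da db) g).
  assert (h3 := Rmin_l da db). assert (h4 := Rmin_r da db).
  specialize (Ka s Hs ltac:(lra)). specialize (Kb s Hs ltac:(lra)).
  assert (x0 - m < x).
  { destruct (Rlt_or_le (x0 - m) x); auto. assert (Phi x s <= Phi (x0 - m) s) by (apply Hmonole; auto). rabs; lra. }
  assert (x < x0 + m).
  { destruct (Rlt_or_le x (x0 + m)); auto. assert (Phi (x0 + m) s <= Phi x s) by (apply Hmonole; auto). rabs; lra. }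
  rabs; lra.
Qed.

End Inv.


Lemma pair_eta (p : pt) : p = (fst p, snd p).
Proof. destruct p; reflexivity. Qed.

Lemma strip_row S u v x c : is_strip S u v -> S (x, c) ->
  exists rho, 0 < rho /\ forall y, Rabs (y - x) < rho -> S (y, c).
Proof. intros [Huv [Hin [Hsub Hop]]] Hx.
  destruct (Hop _ Hx) as [e [He Hq]]. exists e. split; auto.
  intros y Hy. apply Hq. simpl. apply Hsub in Hx. simpl in Hx. lra.
  apply dist2_lt. simpl. split. auto. replace (c - c) with 0 by ring. rewrite Rabs_R0; lra.
Qed.

Lemma same_height A u v k : monotone (bd A u v) k -> forall p p', bd A u v p -> bd A u v p' ->
  snd p = snd p' -> snd (k p) = snd (k p').
Proof. intros Hm p p' Hp Hp' Hs.
  destruct (Rtotal_order (fst p) (fst p')) as [h|[h|h]].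
  - assert (Hl : bd_lt p p') by (split; auto).
    destruct Hm as [Hm|Hm].
    + apply (Hm p p' Hp Hp') in Hl. destruct Hl; auto.
    + apply (Hm p p' Hp Hp') in Hl. destruct Hl; auto.
  - rewrite (pair_eta p), (pair_eta p'), h, Hs. reflexivity.
  - assert (Hl : bd_lt p' p) by (split; auto).
    destruct Hm as [Hm|Hm].
    + apply (Hm p' p Hp' Hp) in Hl. destruct Hl; auto.
    + apply (Hm p' p Hp' Hp) in Hl. destruct Hl; auto.
Qed.

Lemma diff_height A u v k : monotone (bd A u v) k ->
  (forall p p', bd A u v p -> bd A u v p' -> k p = k p' -> p = p') ->
  forall p p', bd A u v p -> bd A u v p' ->
  snd p <> snd p' -> snd (k p) <> snd (k p').
Proof. intros Hm Hinj p p' Hp Hp' Hs Hk.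
  destruct (Rtotal_order (fst (k p)) (fst (k p'))) as [h|[h|h]].
  - assert (Hl : bd_lt (k p) (k p')) by (split; auto).
    destruct Hm as [Hm|Hm].
    + apply (Hm p p' Hp Hp') in Hl. destruct Hl; auto.
    + apply (Hm p' p Hp' Hp) in Hl. destruct Hl; auto.
  - apply Hs. f_equal. apply Hinj; auto. rewrite (pair_eta (k p)), (pair_eta (k p')), h, Hk. reflexivity.
  - assert (Hl : bd_lt (k p') (k p)) by (split; auto).
    destruct Hm as [Hm|Hm].
    + apply (Hm p' p Hp' Hp) in Hl. destruct Hl; auto.
    + apply (Hm p p' Hp Hp') in Hl. destruct Hl; auto.
Qed.

Definition clamp a b z := Rmax (Rmin a b) (Rmin z (Rmax a b)).

Lemma clamp_id a b z : Rmin a b <= z <= Rmax a b -> clamp a b z = z.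
Proof. unfold clamp, Rmin, Rmax. intros. repeat destruct Rle_dec; lra. Qed.
Lemma clamp_in a b z : Rmin a b <= clamp a b z <= Rmax a b.
Proof. unfold clamp, Rmin, Rmax. repeat destruct Rle_dec; lra. Qed.
Lemma clamp_lip a b z z' : Rabs (clamp a b z - clamp a b z') <= Rabs (z - z').
Proof. unfold clamp, Rmin, Rmax. repeat destruct Rle_dec; rabs; lra. Qed.

Lemma comp_map A u v A' u' v' k : is_strip A u v ->
  (forall p, bd A u v p -> bd A' u' v' (k p)) -> cont_on (bd A u v) k -> monotone (bd A u v) k ->
  forall p0 q, bd A u v p0 -> bd_interval A u v p0 q -> bd_interval A' u' v' (k p0) (k q).
Proof. intros HA Hmap Hc Hm [a c] [b c'] Hp0 [Hq1 Hq2]. simpl in *. subst c'.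
  assert (Hcuv : c = u \/ c = v) by (destruct Hp0; auto).
  assert (Hb : bd A u v (b, c)) by (apply Hq2; unfold Rmin, Rmax; repeat destruct Rle_dec; lra).
  assert (Hsh : snd (k (b, c)) = snd (k (a, c))) by (apply (same_height A u v k Hm); auto).
  split; auto.
  intros y Hy.
  set (F := fun z => fst (k (clamp a b z, c))).
  assert (HF : continuity F).
  { intro z. apply cont1_pt. apply eps_cont1. intros eps He.
    set (w := clamp a b z). assert (Hw : bd A u v (w, c)) by (apply Hq2; apply clamp_in).
    destruct (strip_row A u v w c HA (proj1 Hw)) as [rho [Hrho Hr]].
    destruct (Hc _ Hw eps He) as [d [Hd Hd']].
    exists (Rmin rho d). split. apply Rmin_pos; auto.
    intros z' Hz'. assert (h1 := Rmin_l rho d). assert (h2 := Rmin_r rho d).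
    assert (Hl := clamp_lip a b z' z).
    assert (Hw' : bd A u v (clamp a b z', c)).
    { split; auto. apply Hr. unfold w. lra. }
    specialize (Hd' _ Hw'). unfold F. fold w.
    assert (dist2 (w, c) (clamp a b z', c) < d).
    { apply dist2_lt. simpl. split. unfold w. lra. replace (c - c) with 0 by ring. rewrite Rabs_R0; lra. }
    specialize (Hd' H). apply dist2_lt in Hd'. destruct Hd'. exact H0. }
  assert (Ha' : clamp a b a = a) by (apply clamp_id; unfold Rmin, Rmax; repeat destruct Rle_dec; lra).
  assert (Hb' : clamp a b b = b) by (apply clamp_id; unfold Rmin, Rmax; repeat destruct Rle_dec; lra).
  destruct (IVT_gen F a b y HF) as [z [Hz HFz]].
  { unfold F. rewrite Ha', Hb'. exact Hy. }
  unfold F in HFz. rewrite clamp_id in HFz by auto.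
  assert (Hz' : bd A u v (z, c)) by (apply Hq2; auto).
  assert (Hsz : snd (k (z, c)) = snd (k (a, c))) by (apply (same_height A u v k Hm); auto).
  replace (y, snd (k (a, c))) with (k (z, c)). apply Hmap; auto.
  rewrite (pair_eta (k (z, c))). rewrite HFz, Hsz. reflexivity.
Qed.


Lemma homeo_inj A B h : homeo_on A B h -> forall p p', A p -> A p' -> h p = h p' -> p = p'.
Proof. intros [_ [g [_ [Hgh _]]]] p p' Hp Hp' He.
  rewrite <- (Hgh p Hp), <- (Hgh p' Hp'), He. reflexivity. Qed.

Lemma heights S1 u1 v1 S2 u2 v2 h : is_strip S1 u1 v1 -> is_strip S2 u2 v2 ->
  homeo_on (bd S1 u1 v1) (bd S2 u2 v2) h -> monotone (bd S1 u1 v1) h ->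
  exists al be, ((al = u2 /\ be = v2 - u2) \/ (al = v2 /\ be = u2 - v2)) /\
   (forall x, S1 (x, u1) -> snd (h (x, u1)) = al) /\
   (forall x, S1 (x, v1) -> snd (h (x, v1)) = al + be).
Proof. intros H1 H2 Hh Hm.
  assert (Huv1 : u1 < v1) by (destruct H1; auto).
  assert (Huv2 : u2 < v2) by (destruct H2; auto).
  assert (Hinj := homeo_inj _ _ _ Hh).
  assert (Hmap : forall p, bd S1 u1 v1 p -> snd (h p) = u2 \/ snd (h p) = v2).
  { intros p Hp. destruct Hh as [Hmap _]. apply Hmap in Hp. destruct Hp; auto. }
  assert (Bm : forall x, S1 (x, u1) -> bd S1 u1 v1 (x, u1)) by (intros; split; auto).
  assert (Bp : forall x, S1 (x, v1) -> bd S1 u1 v1 (x, v1)) by (intros; split; auto).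
  assert (Hd : forall x y, S1 (x, u1) -> S1 (y, v1) -> snd (h (x, u1)) <> snd (h (y, v1))).
  { intros x y Hx Hy. apply (diff_height S1 u1 v1 h Hm Hinj); auto. simpl; lra. }
  destruct (classic ((exists x, S1 (x, u1) /\ snd (h (x, u1)) = v2) \/ (exists x, S1 (x, v1) /\ snd (h (x, v1)) = u2))) as [[[x0 [Hx0 Hx0']]|[x0 [Hx0 Hx0']]]|Hn].
  - exists v2, (u2 - v2). split. right; auto. split.
    + intros x Hx. rewrite <- Hx0'. apply (same_height S1 u1 v1 h Hm); auto.
    + intros x Hx. replace (v2 + (u2 - v2)) with u2 by ring.
      destruct (Hmap _ (Bp x Hx)); auto. exfalso. apply (Hd x0 x); auto. congruence.
  - exists v2, (u2 - v2). split. right; auto. split.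
    + intros x Hx. destruct (Hmap _ (Bm x Hx)); auto. exfalso. apply (Hd x x0); auto. congruence.
    + intros x Hx. replace (v2 + (u2 - v2)) with u2 by ring. rewrite <- Hx0'. apply (same_height S1 u1 v1 h Hm); auto.
  - exists u2, (v2 - u2). split. left; auto. split.
    + intros x Hx. destruct (Hmap _ (Bm x Hx)); auto. exfalso. apply Hn. left. exists x; auto.
    + intros x Hx. replace (u2 + (v2 - u2)) with v2 by ring.
      destruct (Hmap _ (Bp x Hx)); auto. exfalso. apply Hn. right. exists x; auto.
Qed.

Lemma orient A u v h : monotone (bd A u v) h ->
  exists ep, (ep = 1 \/ ep = -1) /\ forall p p', bd A u v p -> bd A u v p' -> snd p = snd p' ->
    fst p < fst p' -> ep * fst (h p) < ep * fst (h p').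
Proof. intros [Hm|Hm].
  - exists 1. split. left; auto. intros p p' Hp Hp' Hs Hf.
    assert (bd_lt p p') by (split; auto). apply (Hm p p' Hp Hp') in H. destruct H. lra.
  - exists (-1). split. right; auto. intros p p' Hp Hp' Hs Hf.
    assert (bd_lt p p') by (split; auto). apply (Hm p p' Hp Hp') in H. destruct H. lra.
Qed.


Section Main.
Variables (S1 S2 : pt -> Prop) (u1 v1 u2 v2 : R) (h g : pt -> pt) (al be ep : R).
Hypothesis HS1 : is_strip S1 u1 v1.
Hypothesis HS2 : is_strip S2 u2 v2.
Hypothesis Hhmap : forall p, bd S1 u1 v1 p -> bd S2 u2 v2 (h p).
Hypothesis Hgmap : forall q, bd S2 u2 v2 q -> bd S1 u1 v1 (g q).
Hypothesis Hgh : forall p, bd S1 u1 v1 p -> g (h p) = p.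
Hypothesis Hhg : forall q, bd S2 u2 v2 q -> h (g q) = q.
Hypothesis Hhc : cont_on (bd S1 u1 v1) h.
Hypothesis Hgc : cont_on (bd S2 u2 v2) g.
Hypothesis Hm : monotone (bd S1 u1 v1) h.
Hypothesis Hal : (al = u2 /\ be = v2 - u2) \/ (al = v2 /\ be = u2 - v2).
Hypothesis Hhu : forall x, S1 (x, u1) -> snd (h (x, u1)) = al.
Hypothesis Hhv : forall x, S1 (x, v1) -> snd (h (x, v1)) = al + be.
Hypothesis Hep : ep = 1 \/ ep = -1.
Hypothesis Hor : forall p p', bd S1 u1 v1 p -> bd S1 u1 v1 p' -> snd p = snd p' ->
    fst p < fst p' -> ep * fst (h p) < ep * fst (h p').

Definition Bm x := S1 (x, u1).
Definition Bp x := S1 (x, v1).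
Definition fm x := ep * fst (h (x, u1)).
Definition fp x := ep * fst (h (x, v1)).
Definition d1 := v1 - u1.
Definition sf t := (t - u1) / d1.
Definition tau t := al + be * sf t.
Definition sinv t := (t - al) / be.
Definition Phi0 := Phi Bm Bp fm fp.
Definition Psi0 := Psi Phi0.

Definition Hmap (p : pt) : pt :=
  if Req_EM_T (snd p) u1 then h p else if Req_EM_T (snd p) v1 then h p else
  (ep * Phi0 (fst p) (sf (snd p)), tau (snd p)).
Definition Gmap (q : pt) : pt :=
  if Req_EM_T (snd q) u2 then g q else if Req_EM_T (snd q) v2 then g q else
  (Psi0 (ep * fst q) (sinv (snd q)), u1 + d1 * sinv (snd q)).

Lemma uv1 : u1 < v1. Proof. destruct HS1; auto. Qed.
Lemma uv2 : u2 < v2. Proof. destruct HS2; auto. Qed.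
Lemma d1_pos : 0 < d1. Proof. unfold d1; generalize uv1; lra. Qed.
Lemma be_abs : Rabs be = v2 - u2.
Proof. generalize uv2; intro. destruct Hal as [[_ ->]|[_ ->]]; rabs; lra. Qed.
Lemma be_nz : be <> 0.
Proof. generalize uv2 be_abs; intros. intro Hb. rewrite Hb, Rabs_R0 in *. lra. Qed.
Lemma ep2 : ep * ep = 1. Proof. destruct Hep; subst; lra. Qed.
Lemma ep_abs : Rabs ep = 1. Proof. destruct Hep; subst; rabs; lra. Qed.

Lemma fm_smono y z : Bm y -> Bm z -> y < z -> fm y < fm z.
Proof. intros. unfold fm. apply (Hor (y, u1) (z, u1)); simpl; auto; split; auto. Qed.
Lemma fp_smono y z : Bp y -> Bp z -> y < z -> fp y < fp z.
Proof. intros. unfold fp. apply (Hor (y, v1) (z, v1)); simpl; auto; split; auto. Qed.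
Lemma fm_mono y z : Bm y -> Bm z -> y <= z -> fm y <= fm z.
Proof. intros Hy Hz [H|H]. left; apply fm_smono; auto. subst; lra. Qed.
Lemma fp_mono y z : Bp y -> Bp z -> y <= z -> fp y <= fp z.
Proof. intros Hy Hz [H|H]. left; apply fp_smono; auto. subst; lra. Qed.

Lemma f_cont c (f : R -> R) : (c = u1 \/ c = v1) -> (forall x, f x = ep * fst (h (x, c))) ->
  forall x, S1 (x, c) -> forall eps, 0 < eps -> exists d, 0 < d /\
  forall y, S1 (y, c) -> Rabs (y - x) < d -> Rabs (f y - f x) < eps.
Proof. intros Hc Hf x Hx eps He.
  destruct (Hhc (x, c) (conj Hx Hc) eps He) as [d [Hd Hq]].
  exists d; split; auto. intros y Hy Hyx.
  assert (dist2 (x, c) (y, c) < d).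
  { apply dist2_lt; simpl. split; auto. replace (c - c) with 0 by ring. rewrite Rabs_R0; lra. }
  specialize (Hq (y, c) (conj Hy Hc) H). apply dist2_lt in Hq. destruct Hq as [Hq _].
  rewrite !Hf. replace (ep * fst (h (y, c)) - ep * fst (h (x, c))) with (ep * (fst (h (y, c)) - fst (h (x, c)))) by ring.
  rewrite Rabs_mult, ep_abs. lra.
Qed.

Lemma fm_cont x : Bm x -> forall eps, 0 < eps -> exists d, 0 < d /\
  forall y, Bm y -> Rabs (y - x) < d -> Rabs (fm y - fm x) < eps.
Proof. apply (f_cont u1 fm); auto. Qed.
Lemma fp_cont x : Bp x -> forall eps, 0 < eps -> exists d, 0 < d /\
  forall y, Bp y -> Rabs (y - x) < d -> Rabs (fp y - fp x) < eps.
Proof. apply (f_cont v1 fp); auto. Qed.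

Lemma P0_mono s x x' : 0 < s < 1 -> x < x' -> Phi0 x s < Phi0 x' s.
Proof. intros. apply Phi_mono; auto. Qed.
Lemma P0_surj s y : 0 < s < 1 -> exists x, Phi0 x s = y.
Proof. intros. apply Phi_surj; auto. Qed.
Lemma P0_cont x0 s0 : 0 < s0 < 1 -> continuous (fun z : R * R => Phi0 (fst z) (snd z)) (x0, s0).
Proof. intros. apply Phi_cont; auto. Qed.

Lemma P0_conv0 x : Bm x -> forall eps, 0 < eps -> exists d, 0 < d /\
  forall s, 0 < s < 1 -> Rabs (s - 0) < d -> Rabs (Phi0 x s - fm x) < eps.
Proof. intros Hx eps He.
  destruct (Phi_conv0 Bm Bp fm fp fm_mono fm_cont x Hx eps He) as [d [Hd Hq]].
  exists d; split; auto. intros s Hs Hsd. apply Hq; auto. rabs; lra.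
Qed.
Lemma P0_conv1 x : Bp x -> forall eps, 0 < eps -> exists d, 0 < d /\
  forall s, 0 < s < 1 -> Rabs (s - 1) < d -> Rabs (Phi0 x s - fp x) < eps.
Proof. intros Hx eps He.
  destruct (Phi_conv1 Bm Bp fm fp fp_mono fp_cont x Hx eps He) as [d [Hd Hq]].
  exists d; split; auto. intros s Hs Hsd. apply Hq; auto. rabs; lra.
Qed.

Lemma Psi0_spec y s : 0 < s < 1 -> Phi0 (Psi0 y s) s = y.
Proof. intros. apply Psi_spec; auto. intros; apply P0_surj; auto. Qed.
Lemma Psi0_Phi0 x s : 0 < s < 1 -> Psi0 (Phi0 x s) s = x.
Proof. intros. apply Psi_Phi; auto. intros; apply P0_mono; auto. intros; apply P0_surj; auto. Qed.
Lemma Psi0_cont y0 s0 : 0 < s0 < 1 -> continuous (fun z : R * R => Psi0 (fst z) (snd z)) (y0, s0).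
Proof. intros. apply Psi_cont; auto. intros; apply P0_mono; auto. intros; apply P0_surj; auto.
  intros; apply P0_cont; auto. Qed.

Lemma sf_in t : u1 < t < v1 -> 0 < sf t < 1.
Proof. intro. unfold sf. generalize d1_pos; intro. unfold d1 in *. split.
  apply Rdiv_lt_0_compat; lra. apply div_lt_l; lra. Qed.
Lemma tau_in s : 0 < s < 1 -> u2 < al + be * s < v2.
Proof. intro. destruct Hal as [[-> ->]|[-> ->]]; generalize uv2; intro; nra. Qed.
Lemma sinv_in t : u2 < t < v2 -> 0 < sinv t < 1.
Proof. intro. unfold sinv. generalize uv2; intro. destruct Hal as [[-> ->]|[-> ->]].
  - split. apply Rdiv_lt_0_compat; lra. apply div_lt_l; lra.
  - replace ((t - v2) / (u2 - v2)) with ((v2 - t) / (v2 - u2)) by (field; lra).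
    split. apply Rdiv_lt_0_compat; lra. apply div_lt_l; lra.
Qed.
Lemma sinv_tau s : sinv (al + be * s) = s.
Proof. unfold sinv. generalize be_nz; intro. field; auto. Qed.
Lemma tau_sinv t : al + be * sinv t = t.
Proof. unfold sinv. generalize be_nz; intro. field; auto. Qed.
Lemma sf_lin s : sf (u1 + d1 * s) = s.
Proof. unfold sf. generalize d1_pos; intro. field; lra. Qed.

Lemma S1_int p : S1 p -> snd p <> u1 -> snd p <> v1 -> u1 < snd p < v1.
Proof. intros Hp h1 h2. destruct HS1 as [_ [_ [Hs _]]]. apply Hs in Hp. lra. Qed.
Lemma S2_int q : S2 q -> snd q <> u2 -> snd q <> v2 -> u2 < snd q < v2.
Proof. intros Hp h1 h2. destruct HS2 as [_ [_ [Hs _]]]. apply Hs in Hp. lra. Qed.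

Lemma H_bd p : snd p = u1 \/ snd p = v1 -> Hmap p = h p.
Proof. intro. unfold Hmap. destruct Req_EM_T; auto. destruct Req_EM_T; auto. exfalso; tauto. Qed.
Lemma H_int p : snd p <> u1 -> snd p <> v1 -> Hmap p = (ep * Phi0 (fst p) (sf (snd p)), tau (snd p)).
Proof. intros. unfold Hmap. destruct Req_EM_T; [tauto|]. destruct Req_EM_T; [tauto|]. auto. Qed.
Lemma G_bd q : snd q = u2 \/ snd q = v2 -> Gmap q = g q.
Proof. intro. unfold Gmap. destruct Req_EM_T; auto. destruct Req_EM_T; auto. exfalso; tauto. Qed.
Lemma G_int q : snd q <> u2 -> snd q <> v2 -> Gmap q = (Psi0 (ep * fst q) (sinv (snd q)), u1 + d1 * sinv (snd q)).
Proof. intros. unfold Gmap. destruct Req_EM_T; [tauto|]. destruct Req_EM_T; [tauto|]. auto. Qed.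


Lemma min_lt a b c : c < Rmin a b -> c < a /\ c < b.
Proof. intros. generalize (Rmin_l a b) (Rmin_r a b). lra. Qed.

Lemma H_bd_cont c sst (B : R -> Prop) (f : R -> R) :
  c = u1 + d1 * sst -> (sst = 0 \/ sst = 1) -> (forall x, B x <-> S1 (x, c)) ->
  (forall x, B x -> h (x, c) = (ep * f x, al + be * sst)) ->
  (forall x, B x -> forall eps, 0 < eps -> exists d, 0 < d /\
     forall s, 0 < s < 1 -> Rabs (s - sst) < d -> Rabs (Phi0 x s - f x) < eps) ->
  (forall x, B x -> forall eps, 0 < eps -> exists d, 0 < d /\
     forall y, B y -> Rabs (y - x) < d -> Rabs (f y - f x) < eps) ->
  forall x0, B x0 -> forall eps, 0 < eps -> exists del, 0 < del /\
    forall q, S1 q -> dist2 (x0, c) q < del -> dist2 (Hmap (x0, c)) (Hmap q) < eps.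
Proof. intros Hc Hsst HB Hhf Hconv Hfc x0 Hx0 eps He.
  assert (Hd1 := d1_pos).
  assert (Hcuv : c = u1 \/ c = v1) by (unfold d1 in *; destruct Hsst; subst; [left|right]; ring).
  assert (Hbd0 : bd S1 u1 v1 (x0, c)) by (split; [apply HB; auto| auto]).
  rewrite (H_bd (x0, c)) by auto.
  destruct (Hhc _ Hbd0 eps He) as [e1 [He1 K1]].
  destruct (strip_row S1 u1 v1 x0 c HS1 (proj1 Hbd0)) as [rho [Hrho Hr]].
  destruct (sand_fwd Phi0 P0_mono B f sst Hconv x0 Hx0
     (ex_intro _ rho (conj Hrho (fun y Hy => proj2 (HB y) (Hr y Hy)))) (Hfc x0 Hx0) eps He) as [e2 [He2 K2]].
  set (K := eps / (Rabs be + 1)).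
  assert (HK : 0 < K) by (unfold K; apply Rdiv_lt_0_compat; [lra| generalize (Rabs_pos be); lra]).
  assert (HK2 : Rabs be * K < eps).
  { unfold K. apply (Rmult_lt_reg_r (Rabs be + 1)). generalize (Rabs_pos be); lra.
    replace (Rabs be * (eps / (Rabs be + 1)) * (Rabs be + 1)) with (Rabs be * eps) by (field; generalize (Rabs_pos be); lra).
    generalize (Rabs_pos be); nra. }
  exists (Rmin (Rmin e1 e2) (Rmin (d1 / 2) (d1 * Rmin e2 K))). split.
  { repeat apply Rmin_pos; try lra. apply Rmult_lt_0_compat; auto. apply Rmin_pos; auto. }
  intros [x t] Hq Hd. pose proof Hd as Hd0. apply dist2_lt in Hd; simpl in Hd. destruct Hd as [Hdx Hdt].
  apply min_lt in Hdx. destruct Hdx as [Hdx _]. apply min_lt in Hdx. destruct Hdx as [_ Hdx].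
  apply min_lt in Hdt. destruct Hdt as [Hdt1 Hdt2]. apply min_lt in Hdt1. destruct Hdt1 as [Hdt1 _].
  apply min_lt in Hdt2. destruct Hdt2 as [_ Hdt2].
  destruct (classic (t = u1 \/ t = v1)) as [Ht|Ht].
  - rewrite (H_bd (x, t)) by auto. apply K1. split; auto.
    eapply Rlt_le_trans; [exact Hd0|]. eapply Rle_trans; apply Rmin_l.
  - assert (Htu : t <> u1) by tauto. assert (Htv : t <> v1) by tauto.
    rewrite (H_int (x, t)) by auto. simpl.
    assert (Hti : u1 < t < v1) by (apply (S1_int (x, t)); auto).
    assert (Hs := sf_in t Hti).
    assert (Hss : Rabs (sf t - sst) < Rmin e2 K).
    { replace (sf t - sst) with ((t - c) / d1) by (unfold sf; rewrite Hc; field; lra).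
      rewrite Rabs_div by lra. rewrite (Rabs_pos_eq d1) by lra. apply div_lt_l; auto. lra. }
    apply min_lt in Hss. destruct Hss as [Hs1 Hs2].
    specialize (K2 x (sf t) Hs Hs1 Hdx).
    rewrite Hhf by auto. apply dist2_lt; simpl. split.
    + replace (ep * Phi0 x (sf t) - ep * f x0) with (ep * (Phi0 x (sf t) - f x0)) by ring.
      rewrite Rabs_mult, ep_abs. lra.
    + unfold tau. replace (al + be * sf t - (al + be * sst)) with (be * (sf t - sst)) by ring.
      rewrite Rabs_mult. generalize (Rabs_pos be) (Rabs_pos (sf t - sst)); intros. nra.
Qed.

Lemma G_bd_cont c sst (B : R -> Prop) (f : R -> R) :
  c = u1 + d1 * sst -> (sst = 0 \/ sst = 1) -> (forall x, B x <-> S1 (x, c)) ->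
  (forall x, B x -> h (x, c) = (ep * f x, al + be * sst)) ->
  (forall x, B x -> forall eps, 0 < eps -> exists d, 0 < d /\
     forall s, 0 < s < 1 -> Rabs (s - sst) < d -> Rabs (Phi0 x s - f x) < eps) ->
  (forall y z, B y -> B z -> y < z -> f y < f z) ->
  forall x0, B x0 -> forall eps, 0 < eps -> exists del, 0 < del /\
    forall q, S2 q -> dist2 (h (x0, c)) q < del -> dist2 (Gmap (h (x0, c))) (Gmap q) < eps.
Proof. intros Hc Hsst HB Hhf Hconv Hfs x0 Hx0 eps He.
  assert (Hd1 := d1_pos). assert (Hbe := be_abs). assert (Huv2 := uv2).
  assert (Hcuv : c = u1 \/ c = v1) by (unfold d1 in *; destruct Hsst; subst; [left|right]; ring).
  assert (Hbd0 : bd S1 u1 v1 (x0, c)) by (split; [apply HB; auto| auto]).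
  assert (Hbd1 : bd S2 u2 v2 (h (x0, c))) by auto.
  rewrite (G_bd (h (x0, c))) by (destruct Hbd1; auto).
  destruct (Hgc _ Hbd1 eps He) as [e1 [He1 K1]].
  destruct (strip_row S1 u1 v1 x0 c HS1 (proj1 Hbd0)) as [rho [Hrho Hr]].
  destruct (sand_inv Phi0 P0_mono B f sst Hconv Hfs x0 Hx0
     (ex_intro _ rho (conj Hrho (fun y Hy => proj2 (HB y) (Hr y Hy)))) eps He) as [e2 [He2 K2]].
  set (K := eps / (d1 + 1)).
  assert (HK : 0 < K) by (unfold K; apply Rdiv_lt_0_compat; lra).
  assert (HK2 : d1 * K < eps).
  { unfold K. apply (Rmult_lt_reg_r (d1 + 1)). lra.
    replace (d1 * (eps / (d1 + 1)) * (d1 + 1)) with (d1 * eps) by (field; lra). nra. }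
  exists (Rmin (Rmin e1 e2) (Rabs be * Rmin e2 K)). split.
  { repeat apply Rmin_pos; try lra. apply Rmult_lt_0_compat; [lra| apply Rmin_pos; auto]. }
  intros [y t] Hq Hd. pose proof Hd as Hd0. rewrite (Hhf x0 Hx0) in Hd.
  apply dist2_lt in Hd; simpl in Hd. destruct Hd as [Hdx Hdt].
  apply min_lt in Hdx. destruct Hdx as [Hdx _]. apply min_lt in Hdx. destruct Hdx as [_ Hdx].
  apply min_lt in Hdt. destruct Hdt as [_ Hdt].
  destruct (classic (t = u2 \/ t = v2)) as [Ht|Ht].
  - rewrite (G_bd (y, t)) by auto. apply K1. split; auto.
    eapply Rlt_le_trans; [exact Hd0|]. eapply Rle_trans; apply Rmin_l.
  - assert (Htu : t <> u2) by tauto. assert (Htv : t <> v2) by tauto.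
    rewrite (G_int (y, t)) by auto. simpl. rewrite Hgh by auto.
    assert (Hti : u2 < t < v2) by (apply (S2_int (y, t)); auto).
    assert (Hs := sinv_in t Hti).
    assert (Hss : Rabs (sinv t - sst) < Rmin e2 K).
    { replace (sinv t - sst) with ((t - (al + be * sst)) / be) by (unfold sinv; field; apply be_nz).
      rewrite Rabs_div by apply be_nz. apply div_lt_l. lra. lra. }
    apply min_lt in Hss. destruct Hss as [Hs1 Hs2].
    set (x := Psi0 (ep * y) (sinv t)).
    assert (Hx : Phi0 x (sinv t) = ep * y) by (apply Psi0_spec; auto).
    assert (Hy : Rabs (Phi0 x (sinv t) - f x0) < e2).
    { rewrite Hx. replace (ep * y - f x0) with (ep * (y - ep * f x0)) by (generalize ep2; intro; nra).
      rewrite Rabs_mult, ep_abs. lra. }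
    specialize (K2 x (sinv t) Hs Hs1 Hy).
    apply dist2_lt; simpl. split. lra.
    replace (u1 + d1 * sinv t - c) with (d1 * (sinv t - sst)) by (rewrite Hc; ring).
    rewrite Rabs_mult, (Rabs_pos_eq d1) by lra. generalize (Rabs_pos (sinv t - sst)); intros. nra.
Qed.

Lemma sf_cont t : continuous sf t.
Proof. unfold sf, Rdiv.
  apply (continuous_mult (fun t => t - u1) (fun _ => / d1)).
  apply (continuous_plus (fun t => t) (fun _ => - u1)). apply continuous_id. apply continuous_const.
  apply continuous_const.
Qed.
Lemma tau_cont t : continuous tau t.
Proof. unfold tau. apply (continuous_plus (fun _ => al) (fun t => be * sf t)). apply continuous_const.
  apply (continuous_mult (fun _ => be) sf). apply continuous_const. apply sf_cont. Qed.
Lemma sinv_cont t : continuous sinv t.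
Proof. unfold sinv, Rdiv.
  apply (continuous_mult (fun t => t - al) (fun _ => / be)).
  apply (continuous_plus (fun t => t) (fun _ => - al)). apply continuous_id. apply continuous_const.
  apply continuous_const.
Qed.

Lemma cont_pair (F1 F2 : R * R -> R) (p : pt) : continuous F1 p -> continuous F2 p ->
  forall eps, 0 < eps -> exists d, 0 < d /\ forall q, dist2 p q < d -> dist2 (F1 p, F2 p) (F1 q, F2 q) < eps.
Proof. intros C1 C2 eps He.
  destruct (cont2_eps F1 p C1 eps He) as [d1' [Hd1 K1]].
  destruct (cont2_eps F2 p C2 eps He) as [d2' [Hd2 K2]].
  exists (Rmin d1' d2'). split. apply Rmin_pos; auto.
  intros q Hq. apply dist2_lt; simpl. split.
  apply K1. eapply Rlt_le_trans; [exact Hq| apply Rmin_l].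
  apply K2. eapply Rlt_le_trans; [exact Hq| apply Rmin_r].
Qed.

Lemma H_int_cont p : u1 < snd p < v1 -> forall eps, 0 < eps -> exists d, 0 < d /\
  forall q, S1 q -> dist2 p q < d -> dist2 (Hmap p) (Hmap q) < eps.
Proof. intros Hp eps He. destruct p as [x0 t0]. simpl in Hp.
  set (F1 := fun z : R * R => ep * Phi0 (fst z) (sf (snd z))).
  set (F2 := fun z : R * R => tau (snd z)).
  assert (C1 : continuous F1 (x0, t0)).
  { unfold F1. apply (continuous_mult (fun _ : R * R => ep) (fun z : R * R => Phi0 (fst z) (sf (snd z)))).
    apply continuous_const.
    apply (continuous_comp_2 (fun z : R * R => fst z) (fun z : R * R => sf (snd z)) Phi0).
    apply continuous_fst. apply (continuous_comp (fun z : R * R => snd z) sf). apply continuous_snd. apply sf_cont.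
    simpl. apply P0_cont. apply sf_in; auto. }
  assert (C2 : continuous F2 (x0, t0)).
  { unfold F2. apply (continuous_comp (fun z : R * R => snd z) tau). apply continuous_snd. apply tau_cont. }
  destruct (cont_pair F1 F2 (x0, t0) C1 C2 eps He) as [d [Hd K]].
  exists (Rmin d (Rmin (t0 - u1) (v1 - t0))). split. repeat apply Rmin_pos; lra.
  intros [x t] Hq Hdq. pose proof Hdq as Hdq'. apply dist2_lt in Hdq. simpl in Hdq. destruct Hdq as [_ Ht].
  apply min_lt in Ht. destruct Ht as [_ Ht]. apply min_lt in Ht.
  rewrite !H_int by (simpl; rabs; lra). apply K. eapply Rlt_le_trans; [exact Hdq'| apply Rmin_l].
Qed.

Lemma G_int_cont q : u2 < snd q < v2 -> forall eps, 0 < eps -> exists d, 0 < d /\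
  forall q', S2 q' -> dist2 q q' < d -> dist2 (Gmap q) (Gmap q') < eps.
Proof. intros Hq eps He. destruct q as [y0 t0]. simpl in Hq.
  set (F1 := fun z : R * R => Psi0 (ep * fst z) (sinv (snd z))).
  set (F2 := fun z : R * R => u1 + d1 * sinv (snd z)).
  assert (C1 : continuous F1 (y0, t0)).
  { unfold F1. apply (continuous_comp_2 (fun z : R * R => ep * fst z) (fun z : R * R => sinv (snd z)) Psi0).
    apply (continuous_mult (fun _ : R * R => ep) (fun z : R * R => fst z)). apply continuous_const. apply continuous_fst.
    apply (continuous_comp (fun z : R * R => snd z) sinv). apply continuous_snd. apply sinv_cont.
    simpl. apply Psi0_cont. apply sinv_in; auto. }
  assert (C2 : continuous F2 (y0, t0)).
  { unfold F2. apply (continuous_plus (fun _ : R * R => u1) (fun z : R * R => d1 * sinv (snd z))).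
    apply continuous_const. apply (continuous_mult (fun _ : R * R => d1) (fun z : R * R => sinv (snd z))).
    apply continuous_const. apply (continuous_comp (fun z : R * R => snd z) sinv). apply continuous_snd. apply sinv_cont. }
  destruct (cont_pair F1 F2 (y0, t0) C1 C2 eps He) as [d [Hd K]].
  exists (Rmin d (Rmin (t0 - u2) (v2 - t0))). split. repeat apply Rmin_pos; lra.
  intros [x t] Hq' Hdq. pose proof Hdq as Hdq'. apply dist2_lt in Hdq. simpl in Hdq. destruct Hdq as [_ Ht].
  apply min_lt in Ht. destruct Ht as [_ Ht]. apply min_lt in Ht.
  rewrite !G_int by (simpl; rabs; lra). apply K. eapply Rlt_le_trans; [exact Hdq'| apply Rmin_l].
Qed.

Lemma hm_eq x : Bm x -> h (x, u1) = (ep * fm x, al + be * 0).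
Proof. intro Hx. rewrite (pair_eta (h (x, u1))). unfold fm. f_equal.
  rewrite <- Rmult_assoc, ep2; ring. rewrite Hhu by auto; ring. Qed.
Lemma hp_eq x : Bp x -> h (x, v1) = (ep * fp x, al + be * 1).
Proof. intro Hx. rewrite (pair_eta (h (x, v1))). unfold fp. f_equal.
  rewrite <- Rmult_assoc, ep2; ring. rewrite Hhv by auto; ring. Qed.

Lemma v1_eq : v1 = u1 + d1 * 1. Proof. unfold d1; ring. Qed.
Lemma u1_eq : u1 = u1 + d1 * 0. Proof. ring. Qed.

Lemma H_cont : cont_on S1 Hmap.
Proof. intros [x0 t0] Hp eps He.
  destruct (classic (t0 = u1)) as [->|Hu].
  { apply (H_bd_cont u1 0 Bm fm u1_eq (or_introl eq_refl) (fun x => conj (fun h => h) (fun h => h)) hm_eq P0_conv0 fm_cont x0 Hp eps He). }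
  destruct (classic (t0 = v1)) as [->|Hv].
  { apply (H_bd_cont v1 1 Bp fp v1_eq (or_intror eq_refl) (fun x => conj (fun h => h) (fun h => h)) hp_eq P0_conv1 fp_cont x0 Hp eps He). }
  apply H_int_cont; auto. apply (S1_int (x0, t0)); auto.
Qed.

Lemma G_cont : cont_on S2 Gmap.
Proof. intros q Hq eps He.
  destruct (classic (snd q = u2 \/ snd q = v2)) as [Hb|Hb].
  - assert (Hbq : bd S2 u2 v2 q) by (split; auto).
    assert (Hb0 := Hgmap q Hbq). rewrite <- (Hhg q Hbq).
    destruct (g q) as [x0 c] eqn:Eg. destruct Hb0 as [Hx0 [Hc|Hc]]; simpl in Hc; subst c.
    + apply (G_bd_cont u1 0 Bm fm u1_eq (or_introl eq_refl) (fun x => conj (fun h => h) (fun h => h)) hm_eq P0_conv0 fm_smono x0 Hx0 eps He).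
    + apply (G_bd_cont v1 1 Bp fp v1_eq (or_intror eq_refl) (fun x => conj (fun h => h) (fun h => h)) hp_eq P0_conv1 fp_smono x0 Hx0 eps He).
  - apply G_int_cont; auto. apply S2_int; auto; tauto.
Qed.

Lemma bd_interval_bd S u v p0 p : bd_interval S u v p0 p -> bd S u v p.
Proof. destruct p0 as [a c], p as [b c']. intros [Hs Hall]. simpl in *. subst c'.
  apply Hall. unfold Rmin, Rmax; destruct Rle_dec; lra. Qed.

Lemma g_mono : monotone (bd S2 u2 v2) g.
Proof. destruct Hm as [Hp|Hr]; [left|right]; intros b b' Hb Hb'.
  - rewrite (Hp (g b) (g b') (Hgmap b Hb) (Hgmap b' Hb')), !Hhg by auto. tauto.
  - rewrite (Hr (g b') (g b) (Hgmap b' Hb') (Hgmap b Hb)), !Hhg by auto. tauto.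
Qed.

Lemma H_leaves L : leaf S1 u1 v1 L -> leaf S2 u2 v2 (image Hmap L).
Proof. intros [[t [Ht HL]] | [p0 [Hp0 HL]]].
  - left. exists (tau t). split. unfold tau; apply tau_in; apply sf_in; auto.
    intro q; split.
    + intros [p [Lp ->]]. apply HL in Lp. rewrite H_int by lra. simpl. rewrite Lp; auto.
    + intro Hq. exists (Psi0 (ep * fst q) (sf t), t). split. apply HL; auto.
      rewrite H_int by (simpl; lra). simpl. rewrite Psi0_spec by (apply sf_in; auto).
      rewrite (pair_eta q) at 1. rewrite Hq. f_equal. rewrite <- Rmult_assoc, ep2; ring.
  - right. exists (h p0). split. auto. intro q. split.
    + intros [p [Lp ->]]. apply HL in Lp. assert (Hbp := bd_interval_bd _ _ _ _ _ Lp).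
      rewrite H_bd by (destruct Hbp; auto).
      apply (comp_map S1 u1 v1 S2 u2 v2 h HS1 Hhmap Hhc Hm p0 p Hp0 Lp).
    + intro Hq. assert (Hbq := bd_interval_bd _ _ _ _ _ Hq). exists (g q). split.
      * apply HL. pose proof (comp_map S2 u2 v2 S1 u1 v1 g HS2 Hgmap Hgc g_mono (h p0) q (Hhmap p0 Hp0) Hq) as HH.
        rewrite Hgh in HH by auto. exact HH.
      * assert (Hb := Hgmap q Hbq). rewrite H_bd by (destruct Hb; auto). rewrite Hhg; auto.
Qed.

Lemma H_homeo : homeo_on S1 S2 Hmap.
Proof. split.
  - intros p Hp. destruct (classic (snd p = u1 \/ snd p = v1)) as [Hb|Hb].
    + rewrite H_bd by auto. destruct (Hhmap p (conj Hp Hb)); auto.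
    + rewrite H_int by tauto. destruct HS2 as [_ [Hin _]]. apply Hin. simpl. unfold tau.
      apply tau_in. apply sf_in. apply S1_int; auto; tauto.
  - exists Gmap. split; [|split; [|split; [|split]]].
    + intros q Hq. destruct (classic (snd q = u2 \/ snd q = v2)) as [Hb|Hb].
      * rewrite G_bd by auto. destruct (Hgmap q (conj Hq Hb)); auto.
      * rewrite G_int by tauto. destruct HS1 as [_ [Hin _]]. apply Hin. simpl.
        assert (Hs := sinv_in (snd q) (S2_int q Hq ltac:(tauto) ltac:(tauto))).
        assert (Hd1 := d1_pos). unfold d1 in *. nra.
    + intros p Hp. destruct (classic (snd p = u1 \/ snd p = v1)) as [Hb|Hb].
      * rewrite H_bd by auto. assert (Hb2 := Hhmap p (conj Hp Hb)).
        rewrite G_bd by (destruct Hb2; auto). apply Hgh. split; auto.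
      * assert (Hi := S1_int p Hp ltac:(tauto) ltac:(tauto)). assert (Hs := sf_in _ Hi).
        rewrite H_int by tauto. assert (Ht := tau_in _ Hs).
        rewrite G_int by (simpl; unfold tau; lra). simpl. unfold tau. rewrite sinv_tau.
        replace (ep * (ep * Phi0 (fst p) (sf (snd p)))) with (Phi0 (fst p) (sf (snd p))) by (rewrite <- Rmult_assoc, ep2; ring).
        rewrite Psi0_Phi0 by auto. rewrite (pair_eta p) at 3. f_equal.
        unfold sf. assert (Hd1 := d1_pos). field. lra.
    + intros q Hq. destruct (classic (snd q = u2 \/ snd q = v2)) as [Hb|Hb].
      * rewrite G_bd by auto. assert (Hb2 := Hgmap q (conj Hq Hb)).
        rewrite H_bd by (destruct Hb2; auto). apply Hhg. split; auto.
      * assert (Hi := S2_int q Hq ltac:(tauto) ltac:(tauto)). assert (Hs := sinv_in _ Hi).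
        rewrite G_int by tauto. assert (Hd1 := d1_pos).
        rewrite H_int by (simpl; unfold d1 in *; nra). simpl. unfold tau. rewrite sf_lin, tau_sinv.
        rewrite Psi0_spec by auto. rewrite (pair_eta q) at 3. f_equal. rewrite <- Rmult_assoc, ep2; ring.
    + apply H_cont.
    + apply G_cont.
Qed.

Lemma main_sec : exists H : pt -> pt, foliated_homeo S1 u1 v1 S2 u2 v2 H /\
  forall p, bd S1 u1 v1 p -> H p = h p.
Proof. exists Hmap. split. split. apply H_homeo. apply H_leaves.
  intros p [_ Hp]. apply H_bd; auto. Qed.

End Main.


Theorem mainTheorem2 (S1 : pt -> Prop) (u1 v1 : R) (S2 : pt -> Prop) (u2 v2 : R)
  (h : pt -> pt) :
  is_strip S1 u1 v1 -> is_strip S2 u2 v2 ->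
  homeo_on (bd S1 u1 v1) (bd S2 u2 v2) h ->
  monotone (bd S1 u1 v1) h ->
  exists H : pt -> pt,
    foliated_homeo S1 u1 v1 S2 u2 v2 H /\
    forall p, bd S1 u1 v1 p -> H p = h p.
Proof.
  intros H1 H2 Hh Hm.
  destruct (heights S1 u1 v1 S2 u2 v2 h H1 H2 Hh Hm) as [al [be [Hal [Hhu Hhv]]]].
  destruct (orient S1 u1 v1 h Hm) as [ep [Hep Hor]].
  destruct Hh as [Hhmap [g [Hgmap [Hgh [Hhg [Hhc Hgc]]]]]].
  eapply main_sec; eauto.
Qed.
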